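(* $\frac{n^2}{6}+O(n)\le\mathrm{sat}_\circlearrowright(n,D_1)\le\frac{n^2}{4}+O(n)$.
   Context: $\Omega_n=\{v_0,\dots,v_{n-1}\}$ with cyclic order $v_0<\dots<v_{n-1}<v_0$ (indices mod $n$). A $3$-cgh on $\Omega_n$ is a family of $3$-subsets of $\Omega_n$. For a $3$-cgh $F$, $H$ contains a copy of $F$ if there is an injection of the vertex set of $F$ into $\Omega_n$ preserving the cyclic order and mapping every edge of $F$ to an edge of $H$. $H$ is $F$-saturated if it contains no copy of $F$ but $H\cup\{e\}$ does for every $e\in\binom{\Omega_n}{3}\setminus H$; $\mathrm{sat}_\circlearrowright(n,F)$ is the minimum number of edges of an $F$-saturated $3$-cgh on $\Omega_n$. $D_1$ is the $3$-cgh on $\Omega_4$ with edges $\{v_0,v_1,v_2\}$ and $\{v_0,v_2,v_3\}$ (two triples sharing a pair whose remaining vertices lie on opposite sides of the chord through the shared pair). *)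

(* Defs.v *)
From mathcomp Require Import all_boot all_order all_algebra.
Set Implicit Arguments. Unset Strict Implicit. Unset Printing Implicit Defensive.

(* Vertices of Omega_n are 'I_n, vertex v_i being i; the cyclic order is
   0 < 1 < ... < n-1 < 0.  A 3-cgh on Omega_n is a family of 3-subsets. *)

(* f : 'I_k -> 'I_n preserves the cyclic order: after rotating Omega_n by
   some r, the images of v_0, ..., v_{k-1} are strictly increasing.
   (This forces f to be injective.)  Boolean (finite quantifiers). *)
Definition cyc_preserving (k n : nat) (f : 'I_k -> 'I_n) : bool :=
  [exists r : 'I_n, [forall i : 'I_k, forall j : 'I_k, (i < j)%N ==>
    ((f i + n - r) %% n < (f j + n - r) %% n)%N]].

Definition contains_copy (k n : nat) (F : {set {set 'I_k}})
    (H : {set {set 'I_n}}) : bool :=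
  [exists f : {ffun 'I_k -> 'I_n}, cyc_preserving f &&
    [forall e in F, f @: e \in H]].

Definition saturated (k n : nat) (F : {set {set 'I_k}})
    (H : {set {set 'I_n}}) : bool :=
  [&& [forall e in H, #|e| == 3], ~~ contains_copy F H &
      [forall e : {set 'I_n}, ((#|e| == 3) && (e \notin H)) ==>
        contains_copy F (e |: H)]].

(* The default value 'C(n,3) is an upper bound for #|H| of any
   3-cgh H, so the big minimum is the true minimum whenever an F-saturated
   3-cgh exists (which is always the case: take a maximal F-free one). *)
Definition sat_circ (k n : nat) (F : {set {set 'I_k}}) : nat :=
  \big[minn/'C(n, 3)]_(H : {set {set 'I_n}} | saturated F H) #|H|.

Definition D1 : {set {set 'I_4}} :=
  [set [set inord 0; inord 1; inord 2];
       [set inord 0; inord 2; inord 3]].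

(* Main.v *)
Require Import Defs.
From mathcomp Require Import all_boot all_order all_algebra.
From mathcomp Require Import zify.

Section Gen.
Context {n : nat}.
Implicit Types (a b c d r s x y : 'I_n) (H : {set {set 'I_n}}).

Definition rel r x : nat := (x + n - r) %% n.

Lemma relE r x : rel r x = if (r <= x)%N then x - r else x + n - r.
Proof.
rewrite /rel; have := ltn_ord x; have := ltn_ord r; case: (leqP r x) => h Hr Hx.
  have -> : x + n - r = (x - r) + n by lia.
  by rewrite modnDr modn_small //; lia.
by rewrite modn_small //; lia.
Qed.

Lemma rel_lt r x : rel r x < n.
Proof. rewrite relE; have := ltn_ord x; have := ltn_ord r; case: (leqP r x); lia. Qed.

Lemma relrr r : rel r r = 0.
Proof. by rewrite relE leqnn subnn. Qed.

Lemma rel_inj r x y : rel r x = rel r y -> x = y.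
Proof.
rewrite !relE => h; apply/val_inj => /=; move: h.
have := ltn_ord x; have := ltn_ord r; have := ltn_ord y.
case: (leqP r x); case: (leqP r y); lia.
Qed.

Definition tri a b c : {set 'I_n} := [set a; b; c].

Lemma triC1 a b c : tri a b c = tri b a c.
Proof. by apply/setP=> x; rewrite /tri !inE; case: (x == a); case: (x == b); case: (x == c). Qed.
Lemma triR a b c : tri a b c = tri b c a.
Proof. by apply/setP=> x; rewrite /tri !inE; case: (x == a); case: (x == b); case: (x == c). Qed.
Lemma triC2 a b c : tri a b c = tri a c b.
Proof. by apply/setP=> x; rewrite /tri !inE; case: (x == a); case: (x == b); case: (x == c). Qed.

Definition quad (f : 'I_n -> nat) a b c d := f a < f b /\ f b < f c /\ f c < f d.

Definition pat H a b c d :=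
  (tri a b c \in H /\ tri a c d \in H) \/ (tri b c d \in H /\ tri a b d \in H).

Definition badr r H := exists a b c d, quad (rel r) a b c d /\ pat H a b c d.

Lemma pat_rot H a b c d : pat H a b c d -> pat H b c d a.
Proof.
rewrite /pat => -[[h1 h2]|[h1 h2]].
  by right; split; rewrite -triR.
by left; split => //; rewrite -triR.
Qed.

Arguments pat_rot {H a b c d}.

Lemma lin_rot r a b c d : quad (rel r) a b c d ->
  quad (@nat_of_ord n) a b c d \/ quad (@nat_of_ord n) b c d a \/ quad (@nat_of_ord n) c d a b \/ quad (@nat_of_ord n) d a b c.
Proof.
rewrite /quad !relE.
have := ltn_ord a; have := ltn_ord b; have := ltn_ord c; have := ltn_ord d.
have := ltn_ord r.
case: (leqP r a); case: (leqP r b); case: (leqP r c); case: (leqP r d); lia.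
Qed.

Lemma rot_lin s a b c d : quad (@nat_of_ord n) a b c d ->
  quad (rel s) a b c d \/ quad (rel s) b c d a \/ quad (rel s) c d a b \/ quad (rel s) d a b c.
Proof.
rewrite /quad !relE.
have := ltn_ord a; have := ltn_ord b; have := ltn_ord c; have := ltn_ord d.
have := ltn_ord s.
case: (leqP s a); case: (leqP s b); case: (leqP s c); case: (leqP s d); lia.
Qed.

Arguments rot_lin s {a b c d}.
Arguments lin_rot r {a b c d}.

Lemma badr_rot r s H : badr r H -> badr s H.
Proof.
move=> [a [b [c [d [q p]]]]].
have p1 := pat_rot p; have p2 := pat_rot p1; have p3 := pat_rot p2.
have K : forall a b c d, quad (@nat_of_ord n) a b c d -> pat H a b c d -> badr s H.
  move=> a' b' c' d' q' p'.
  have p1' := pat_rot p'; have p2' := pat_rot p1'; have p3' := pat_rot p2'.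
  case: (rot_lin s q') => [q2|[q2|[q2|q2]]]; by do 4 eexists; eauto.
by case: (lin_rot r q) => [q2|[q2|[q2|q2]]]; apply: K; eauto.
Qed.


Lemma quad_rot s s' a b c d : quad (rel s) a b c d ->
  quad (rel s') a b c d \/ quad (rel s') b c d a \/ quad (rel s') c d a b \/ quad (rel s') d a b c.
Proof.
move=> q.
case: (lin_rot s q) => [q1|[q1|[q1|q1]]]; case: (rot_lin s' q1) => [q2|[q2|[q2|q2]]]; tauto.
Qed.

Arguments quad_rot s s' {a b c d}.

Lemma rel_ge0 s x : (rel s s <= rel s x)%N.
Proof. by rewrite relrr. Qed.

Lemma quad_first s a b c d : quad (rel s) a b c d -> quad (rel a) a b c d.
Proof.
move=> q; have z := relrr a.
case: (quad_rot s a q); rewrite /quad; lia.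
Qed.

Arguments quad_first s {a b c d}.

Lemma copy_badr H s : contains_copy D1 H -> badr s H.
Proof.
move=> /existsP [f /andP [/existsP [r /forallP Hc] /forall_inP He]].
have L : forall i j : 'I_4, (i < j)%N -> rel r (f i) < rel r (f j).
  by move=> i j ij; move: (forallP (Hc i) j); rewrite ij.
pose i0 : 'I_4 := inord 0; pose i1 : 'I_4 := inord 1;
pose i2 : 'I_4 := inord 2; pose i3 : 'I_4 := inord 3.
have E1 : f @: [set i0; i1; i2] \in H by apply: He; rewrite !inE eqxx.
have E2 : f @: [set i0; i2; i3] \in H by apply: He; rewrite !inE eqxx orbT.
rewrite !(imsetU, imsetU1, imset_set1) in E1 E2.
apply: (badr_rot r).
exists (f i0), (f i1), (f i2), (f i3); split.
  by split; [|split]; apply: L; rewrite /= !inordK.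
by left; split.
Qed.

Lemma badr_copy H s : badr s H -> contains_copy D1 H.
Proof.
have K : forall a b c d, quad (rel a) a b c d -> tri a b c \in H -> tri a c d \in H ->
    contains_copy D1 H.
  move=> a b c d [q1 [q2 q3]] h1 h2.
  pose f := [ffun i : 'I_4 => nth a [:: a; b; c; d] i].
  have Cy : forall i j : 'I_4, (i < j)%N -> rel a (f i) < rel a (f j).
    move=> i j; rewrite !ffunE; have z := relrr a.
    case: i => [[|[|[|[|i]]]] Hi] //; case: j => [[|[|[|[|j]]]] Hj] //= _; lia.
  apply/existsP; exists f.
  apply/andP; split.
    apply/existsP; exists a; apply/forallP => i; apply/forallP => j; apply/implyP.
    exact: Cy.
  apply/forall_inP => e; rewrite !inE => /orP [] /eqP ->;
  rewrite !(imsetU, imsetU1, imset_set1) !ffunE /= !inordK //.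
move=> [a [b [c [d [q [[h1 h2]|[h1 h2]]]]]]].
  exact: (K a b c d (quad_first s q)).
have q' : quad (rel b) b c d a.
  have z := relrr b.
  by case: (quad_rot s b q); rewrite /quad; lia.
apply: (K b c d a q' h1); by rewrite -triR.
Qed.

Lemma triE a b c : tri a b c = a |: (b |: [set c]).
Proof. by apply/setP=> x; rewrite /tri !inE; case: (x == a); case: (x == b); case: (x == c). Qed.

Lemma card_tri a b c : a != b -> b != c -> a != c -> #|tri a b c| = 3.
Proof.
move=> ab bc ac; rewrite triE !cardsU1 cards1 !inE.
by rewrite (negPf ab) (negPf bc) (negPf ac).
Qed.

Lemma in_tri x a b c : x \in tri a b c -> x = a \/ x = b \/ x = c.
Proof. by rewrite /tri !inE => /orP[/orP[]|] /eqP ->; tauto. Qed.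

Lemma tri_eq_sorted (phi : 'I_n -> nat) p q r p' q' r' : injective phi ->
  phi p < phi q -> phi q < phi r -> phi p' < phi q' -> phi q' < phi r' ->
  tri p q r = tri p' q' r' -> [/\ p = p', q = q' & r = r'].
Proof.
move=> inj h1 h2 h3 h4 E.
have M : forall x y z w, x \in tri y z w -> phi x = phi y \/ phi x = phi z \/ phi x = phi w.
  by move=> x y z w /in_tri [->|[->|->]]; tauto.
have m1 : phi p = phi p' \/ phi p = phi q' \/ phi p = phi r'.
  by apply: M; rewrite -E /tri !inE eqxx.
have m2 : phi q = phi p' \/ phi q = phi q' \/ phi q = phi r'.
  by apply: M; rewrite -E /tri !inE eqxx ?orbT.
have m3 : phi r = phi p' \/ phi r = phi q' \/ phi r = phi r'.
  by apply: M; rewrite -E /tri !inE eqxx ?orbT.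
have m4 : phi p' = phi p \/ phi p' = phi q \/ phi p' = phi r.
  by apply: M; rewrite E /tri !inE eqxx.
have m5 : phi q' = phi p \/ phi q' = phi q \/ phi q' = phi r.
  by apply: M; rewrite E /tri !inE eqxx ?orbT.
have m6 : phi r' = phi p \/ phi r' = phi q \/ phi r' = phi r.
  by apply: M; rewrite E /tri !inE eqxx ?orbT.
have e1 : phi p = phi p' by clear m2 m3 m5 m6; lia.
have e2 : phi q = phi q' by clear m1 m3 m4 m6; lia.
have e3 : phi r = phi r' by clear m1 m2 m4 m5; lia.
by split; apply: inj.
Qed.

Lemma card3_sorted (phi : 'I_n -> nat) (e : {set 'I_n}) : injective phi -> #|e| = 3 ->
  exists p q r, [/\ phi p < phi q, phi q < phi r & e = tri p q r].
Proof.
move=> inj he.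
have : 2 < #|e| by rewrite he.
case/card_gt2P => [x [y [z [[xe ye ze] [xy yz zx]]]]].
have E : e = tri x y z.
  have c3 : #|tri x y z| = 3 by rewrite card_tri // eq_sym.
  apply/esym/eqP; rewrite eqEcard c3 he leqnn andbT.
  by apply/subsetP => w /in_tri [->|[->|->]].
have nxy : phi x != phi y by apply: contra xy => /eqP /inj ->.
have nyz : phi y != phi z by apply: contra yz => /eqP /inj ->.
have nzx : phi z != phi x by apply: contra zx => /eqP /inj ->.
have P : forall a b c, tri x y z = tri a b c -> phi a < phi b -> phi b < phi c ->
    exists p q r, [/\ phi p < phi q, phi q < phi r & e = tri p q r].
  by move=> a b c Ea h1 h2; exists a, b, c; rewrite E Ea.
case: (ltngtP (phi x) (phi y)) nxy => // h1 _;
case: (ltngtP (phi y) (phi z)) nyz => // h2 _;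
case: (ltngtP (phi z) (phi x)) nzx => // h3 _.
all: first [ lia | solve [apply: (P x y z); (done || lia || (apply/setP=> w; rewrite /tri !inE; by case: (w == x); case: (w == y); case: (w == z)))] | solve [apply: (P x z y); (done || lia || (apply/setP=> w; rewrite /tri !inE; by case: (w == x); case: (w == y); case: (w == z)))] | solve [apply: (P y x z); (done || lia || (apply/setP=> w; rewrite /tri !inE; by case: (w == x); case: (w == y); case: (w == z)))] | solve [apply: (P y z x); (done || lia || (apply/setP=> w; rewrite /tri !inE; by case: (w == x); case: (w == y); case: (w == z)))] | solve [apply: (P z x y); (done || lia || (apply/setP=> w; rewrite /tri !inE; by case: (w == x); case: (w == y); case: (w == z)))] | solve [apply: (P z y x); (done || lia || (apply/setP=> w; rewrite /tri !inE; by case: (w == x); case: (w == y); case: (w == z)))] ].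
Qed.

Lemma rel0 z x : val z = 0 -> rel z x = x.
Proof. by move=> z0; rewrite relE z0 subn0. Qed.

End Gen.

Lemma bigminn_le (T : finType) (P : pred T) (F : T -> nat) x0 i :
  P i -> \big[minn/x0]_(j | P j) F j <= F i.
Proof.
move=> Pi; have : i \in index_enum T by rewrite mem_index_enum.
elim: (index_enum T) => [//|a r IH]; rewrite inE big_cons => /orP [/eqP <-|/IH h].
  by rewrite Pi geq_minl.
by case: (P a) => //; apply: leq_trans (geq_minr _ _) h.
Qed.

Lemma card_bigcup_le (I T : finType) (P : pred I) (F : I -> {set T}) :
  #|\bigcup_(i | P i) F i| <= \sum_(i | P i) #|F i|.
Proof.
elim/big_rec2: _ => [|i y1 y2 _ h]; first by rewrite cards0.
by rewrite cardsU; apply: leq_trans (leq_subr _ _) _; rewrite leq_add2l.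
Qed.

Lemma sum_gt' k m : \sum_(r < m) (k < r) = m - k.+1.
Proof.
elim: m => [|m IH]; first by rewrite big_ord0.
by rewrite big_ord_recr /= IH; case: ltnP => h; lia.
Qed.

Section Comb.
Variables (N : nat) (I O E : nat -> bool).
Hypotheses (hI1 : ~~ I 1) (hIO : forall t, t < N -> ~~ (I t && O t))
  (h3 : forall t, 0 < t -> t.+1 < N -> [|| E t, I t | O t.+1]).

Definition cA s := \sum_(t < s.+1) ((0 < t) && ~~ I t && ~~ O t).
Definition cB s := \sum_(t < s) ((0 < t) && E t).

Lemma comb_inv s : 0 < s -> s < N -> cA s <= (cB s).+1 /\ (cA s = (cB s).+1 -> ~~ I s).
Proof.
elim: s => [//|s IH] _ hs.
case: (posnP s) => [->|s0].
  rewrite /cA /cB !big_ord_recr !big_ord0 /=.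
  by split; [case: (~~ I 1 && _)|]; rewrite ?(negPf hI1).
have [i1 i2] := IH s0 (ltnW hs).
rewrite /cA /cB big_ord_recr [\sum_(t < s.+1) _]big_ord_recr /= -/(cA s) -/(cB s).
move: i1 i2; set a := cA s; set b := cB s => i1 i2.
have H3 := h3 _ s0 hs.
have Hio := hIO _ hs.
have Hio' := hIO _ (ltnW hs).
rewrite s0 /=.
case: (I s) H3 Hio' i2 => /=; case: (E s) => /=; case: (I s.+1) Hio; case: (O s.+1) => //=;
  try (move=> *; split; lia).
Qed.

Lemma sum1N m : \sum_(t < m) 1 = m.
Proof. by rewrite sum_nat_const card_ord muln1. Qed.

Lemma comb : 2 < N -> N - 4 <= \sum_(t < N) ((1 < t) && (t < N.-1) && (I t || O t))
   + \sum_(t < N) ((0 < t) && (t.+1 < N) && E t).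
Proof.
move=> N3.
have [i1 _] := @comb_inv N.-1 (ltac:(lia)) (ltac:(lia)).
have eA : cA N.-1 = \sum_(t < N) ((0 < t) && ~~ I t && ~~ O t).
  by rewrite /cA prednK //; lia.
have eB : cB N.-1 = \sum_(t < N) ((0 < t) && (t.+1 < N) && E t).
  have -> : \sum_(t < N) ((0 < t) && (t.+1 < N) && E t) =
            \sum_(t < N.-1.+1) ((0 < t) && (t.+1 < N) && E t) by rewrite prednK //; lia.
  rewrite big_ord_recr /=.
  have -> : N.-1.+1 < N = false by lia.
  rewrite andbF addn0 /cB; apply: eq_bigr => t _.
  have -> : t.+1 < N by have := ltn_ord t; lia.
  by rewrite andbT.
rewrite eA eB in i1.
have P : \sum_(t < N) 1 <= \sum_(t < N) ((((1 < t) && (t < N.-1) && (I t || O t))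
    + ((0 < t) && ~~ I t && ~~ O t)) + ((t <= 1) + (N.-1 <= t))).
  apply: leq_sum => t _.
  case: (I t); case: (O t); rewrite /=; lia.
rewrite !big_split /= sum1N in P.
have S1 : \sum_(t < N) (t <= 1) + \sum_(t < N) (1 < t) = N.
  rewrite -big_split /= -[RHS]sum1N; apply: eq_bigr => t _; lia.
have S2 : \sum_(t < N) (N.-1 <= t) = 1.
  have -> : \sum_(t < N) (N.-1 <= t) = \sum_(t < N) (N.-2 < t).
    by apply: eq_bigr => t _; lia.
  rewrite sum_gt'; lia.
rewrite sum_gt' in S1.
move: P i1 S1 S2; set U := \sum_(t < N) ((1 < t < N.-1) && _); set A := \sum_(t < N) ((0 < t) && ~~ I t && ~~ O t); set B := \sum_(t < N) ((0 < t) && (t.+1 < N) && E t); set X := \sum_(t < N) (t <= 1); set Y := \sum_(t < N) (N.-1 <= t); lia.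
Qed.
End Comb.

Section Up.
Variable n : nat.
Hypothesis n0 : 0 < n.
Implicit Types (p q r a b c d : 'I_n) (e : {set 'I_n}).

Definition good (p q r : 'I_n) : bool := (p < q) && (q < r) &&
  (((p %% 2 == 1) && (q == p.+1 :> nat)) || ((p == 0 :> nat) && (q %% 2 == 1) && (r == q.+1 :> nat))).

Definition Hs : {set {set 'I_n}} :=
  [set e | [exists p : 'I_n, exists q : 'I_n, exists r : 'I_n, (e == tri p q r) && good p q r]].

Lemma memHs p q r : good p q r -> tri p q r \in Hs.
Proof.
move=> g; rewrite inE; apply/existsP; exists p; apply/existsP; exists q.
by apply/existsP; exists r; rewrite eqxx g.
Qed.

Lemma Hs_mem p q r : p < q -> q < r -> tri p q r \in Hs -> good p q r.
Proof.
move=> h1 h2; rewrite inE => /existsP [p' /existsP [q' /existsP [r' /andP [/eqP E g]]]].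
have [h3 h4] : p' < q' /\ q' < r' by move: g; rewrite /good; lia.
have [-> -> ->] := @tri_eq_sorted _ (@nat_of_ord n) p q r p' q' r' (@ord_inj n) h1 h2 h3 h4 E.
exact: g.
Qed.

Lemma ltn_neq (p q : 'I_n) : p < q -> p != q.
Proof. by move=> h; apply/eqP => E; move: h; rewrite E ltnn. Qed.

Lemma Hs3 e : e \in Hs -> #|e| == 3.
Proof.
rewrite inE => /existsP [p /existsP [q /existsP [r /andP [/eqP -> g]]]].
have [h1 h2] : p < q /\ q < r by move: g; rewrite /good; lia.
by rewrite card_tri // ltn_neq //; apply: ltn_trans h2.
Qed.

Definition z0 : 'I_n := Ordinal n0.

Lemma Hs_free : ~~ contains_copy D1 Hs.
Proof.
apply/negP => /(copy_badr _ z0) [a [b [c [d [q p]]]]].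
move: q; rewrite /quad !rel0 // => -[q1 [q2 q3]].
have q4 : b < d by lia.
have q5 : a < c by lia.
case: p => [[/(Hs_mem _ _ _ q1 q2) g1 /(Hs_mem _ _ _ q5 q3) g2]|[/(Hs_mem _ _ _ q2 q3) g1 /(Hs_mem _ _ _ q1 q4) g2]];
  move: g1 g2; rewrite /good; lia.
Qed.

Lemma Hs_sat e : #|e| == 3 -> e \notin Hs -> contains_copy D1 (e |: Hs).
Proof.
move=> /eqP /(card3_sorted (@nat_of_ord n) e (@ord_inj n)) [p [q [r [h1 h2 E]]]].
rewrite E => hn.
have ng : ~~ good p q r by apply: contra hn; apply: memHs.
have Hr := ltn_ord r.
apply: (badr_copy _ z0).
have In1 : forall x, x \in Hs -> x \in tri p q r |: Hs.
  by move=> x hx; rewrite in_setU1 hx orbT.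
have In2 : tri p q r \in tri p q r |: Hs by rewrite in_setU1 eqxx.
case: (boolP (p %% 2 == 1)) => hp.
  have hq : p.+1 < q by move: ng; rewrite /good; lia.
  have h : p.+1 < n by lia.
  exists p, (Ordinal h), q, r; rewrite /quad !rel0 //=; split; first lia.
  left; split => //; apply: In1; apply: memHs; rewrite /good /=; lia.
case: (posnP p) => p0.
  case: (boolP (q %% 2 == 1)) => hq.
    have hr : q.+1 < r by move: ng; rewrite /good; lia.
    have h : q.+1 < n by lia.
    exists p, q, (Ordinal h), r; rewrite /quad !rel0 //=; split; first lia.
    right; split => //; apply: In1; apply: memHs; rewrite /good /=; lia.
  have h : q.-1 < n by lia.
  exists p, (Ordinal h), q, r; rewrite /quad !rel0 //=; split; first lia.
  left; split => //; apply: In1; apply: memHs; rewrite /good /=; lia.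
have h : p.-1 < n by lia.
exists (Ordinal h), p, q, r; rewrite /quad !rel0 //=; split; first lia.
right; split => //; apply: In1; apply: memHs; rewrite /good /=; lia.
Qed.

Lemma Hs_saturated : saturated D1 Hs.
Proof.
apply/and3P; split.
- by apply/forall_inP => e; apply: Hs3.
- exact: Hs_free.
- apply/forallP => e; apply/implyP => /andP [h3 hn]; exact: Hs_sat.
Qed.

End Up.

Lemma sum_gt k m : \sum_(r < m) (if k < r then 1 else 0) = m - k.+1.
Proof.
elim: m => [|m IH]; first by rewrite big_ord0.
by rewrite big_ord_recr /= IH; case: ltnP => h; lia.
Qed.

Lemma cnt_odd m : 2 * \sum_(p < m) (if p %% 2 == 1 then 1 else 0) + m %% 2 = m.
Proof.
elim: m => [|m IH]; first by rewrite big_ord0.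
rewrite big_ord_recr /=; move: IH; set S := \sum_(i < m) _ => IH; case: eqP => h; lia.
Qed.

Lemma sumS m : 4 * \sum_(p < m) (if p %% 2 == 1 then m - p.+2 else 0) <= m * m + 2 * m.
Proof.
elim: m => [|m IH]; first by rewrite big_ord0.
rewrite big_ord_recr /=.
have -> : m.+1 - m.+2 = 0 by lia.
have L : \sum_(i < m) (if i %% 2 == 1 then m.+1 - i.+2 else 0) <=
         \sum_(i < m) ((if i %% 2 == 1 then m - i.+2 else 0) + (if i %% 2 == 1 then 1 else 0)).
  by apply: leq_sum => i _; case: (_ == _); lia.
rewrite big_split /= in L.
have C := cnt_odd m.
move: L IH C.
set S1 := \sum_(i < m) (if _ then m.+1 - _ else _).
set S2 := \sum_(i < m) (if _ then m - _ else _).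
set S3 := \sum_(i < m) (if _ then 1 else 0).
case: (_ == _); nia.
Qed.

Section Size.
Variable n : nat.
Hypothesis n0 : 0 < n.
Implicit Types (p q r x : 'I_n).

Definition nxt (x : 'I_n) : 'I_n := insubd x x.+1.
Lemma nxtE x : x.+1 < n -> val (nxt x) = x.+1.
Proof. by move=> h; rewrite /nxt val_insubd h. Qed.

Lemma card_set_gt k : #|[set r : 'I_n | k < r]| = n - k.+1.
Proof.
rewrite -sum1_card (eq_bigl (fun r : 'I_n => k < r)); last by move=> r; rewrite inE.
by rewrite big_mkcond /= sum_gt.
Qed.

Lemma Hs_size : 4 * #|Hs n| <= n * n + 6 * n.
Proof.
pose A := \bigcup_(p : 'I_n | p %% 2 == 1) ((fun r => tri p (nxt p) r) @: [set r : 'I_n | p.+1 < r]).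
pose B := (fun q => tri (z0 _ n0) q (nxt q)) @: [set q : 'I_n | q.+1 < n].
have sub : Hs n \subset A :|: B.
  apply/subsetP => e; rewrite inE => /existsP [p /existsP [q /existsP [r /andP [/eqP -> g]]]].
  have Hr := ltn_ord r.
  rewrite /good in g.
  case: (boolP ((p %% 2 == 1) && (q == p.+1 :> nat))) => [/andP [hp /eqP hq]|hn].
    rewrite inE; apply/orP; left; apply/bigcupP; exists p => //.
    apply/imsetP; exists r; first by rewrite inE; lia.
    by congr tri; apply: ord_inj; rewrite nxtE // -hq; lia.
  rewrite inE; apply/orP; right; apply/imsetP; exists q; first by rewrite inE; lia.
  by congr tri; apply: ord_inj; rewrite ?nxtE //=; lia.
have c1 : #|A| <= \sum_(p : 'I_n | p %% 2 == 1) (n - p.+2).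
  apply: leq_trans (card_bigcup_le _ _ _ _) _.
  apply: leq_sum => p _; apply: leq_trans (leq_imset_card _ _) _.
  by rewrite card_set_gt.
have c2 : #|B| <= n.
  apply: leq_trans (leq_imset_card _ _) _.
  by apply: leq_trans (subset_leq_card (subsetT _)) _; rewrite cardsT card_ord.
have c3 := sumS n.
rewrite -big_mkcond /= in c3.
have h2 := subset_leq_card sub.
have h3 : #|A :|: B| <= #|A| + #|B| by rewrite cardsU leq_subr.
move: c1 c3; set S := \sum_(p < n | _) _ => c1 c3.
have h4 : #|Hs n| <= S + n := leq_trans h2 (leq_trans h3 (leq_add c1 c2)).
apply: (leq_trans (leq_mul (leqnn 4) h4)); lia.
Qed.

End Size.

Section Low.
Variable n : nat.
Hypothesis n3 : 3 < n.
Variable H : {set {set 'I_n}}.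
Hypothesis Hs : saturated D1 H.
Implicit Types (j k w x y a b c d : 'I_n) (e : {set 'I_n}).

Lemma n0 : 0 < n. Proof. lia. Qed.

Lemma H3 e : e \in H -> #|e| = 3.
Proof. by case/and3P: Hs => /forall_inP h _ _ /h /eqP. Qed.

Lemma Hfree s : ~ badr s H.
Proof. by case/and3P: Hs => _ /negP h _ /(badr_copy _ s). Qed.

Lemma Hsat e s : #|e| = 3 -> e \notin H -> badr s (e |: H).
Proof.
case/and3P: Hs => _ _ /forallP h he hn; apply: copy_badr.
by move: (h e); rewrite he eqxx hn => /implyP; apply.
Qed.

Definition v j t : 'I_n := Ordinal (@ltn_pmod (t + j) n n0).

Lemma modE t j : t < n -> (t + j) %% n = if t + j < n then t + j else t + j - n.
Proof.
have := ltn_ord j; move=> hj ht; case: ifP => h; first by rewrite modn_small.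
have -> : t + j = (t + j - n) + n by lia.
by rewrite modnDr modn_small; lia.
Qed.

Lemma relv j t : t < n -> rel j (v j t) = t.
Proof.
move=> ht; rewrite relE /= modE //; have Hj := ltn_ord j.
case: (ltnP (t + j) n) => h1 /=.
  by rewrite (_ : j <= t + j) //; lia.
by rewrite (_ : (j <= t + j - n) = false); lia.
Qed.

Lemma vrel j k : v j (rel j k) = k.
Proof.
apply: ord_inj => /=; rewrite modE ?rel_lt // relE.
have Hj := ltn_ord j; have Hk := ltn_ord k.
case: (leqP j k) => h1.
  by rewrite (_ : k - j + j < n) //; lia.
by rewrite (_ : k + n - j + j < n = false); lia.
Qed.

Lemma rel_next j t : t.+1 < n -> rel (v j t) (v j t.+1) = 1.
Proof.
move=> ht; rewrite relE /= !modE //; try lia.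
have Hj := ltn_ord j.
case: (ltnP (t.+1 + j) n) => h1.
  rewrite (_ : t + j < n) /=; last lia.
  by rewrite (_ : t + j <= t.+1 + j) //; lia.
case: (ltnP (t + j) n) => h2 /=.
  by rewrite (_ : (t + j <= t.+1 + j - n) = false); lia.
by rewrite (_ : (t + j - n <= t.+1 + j - n)); lia.
Qed.

Definition In j t := [exists w, (0 < rel j w < t) && (tri j (v j t) w \in H)].
Definition Out j t := [exists w, (t < rel j w) && (tri j (v j t) w \in H)].
Definition Ed j t := tri j (v j t) (v j t.+1) \in H.

Lemma F1 j t : t < n -> ~~ (In j t && Out j t).
Proof.
move=> tn; apply/negP => /andP [/existsP [w /andP [/andP [w0 wt] hw]] /existsP [w' /andP [tw' hw']]].
apply: (Hfree j); exists j, w, (v j t), w'; split.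
  by rewrite /quad relrr relv //; lia.
by left; split => //; rewrite triC2.
Qed.

Lemma F2 j : ~~ In j 1.
Proof. by apply/existsP => -[w /andP [/andP [h1 h2] _]]; lia. Qed.

Lemma F3 j t : 0 < t -> t.+1 < n -> [|| Ed j t, In j t | Out j t.+1].
Proof.
move=> t0 tn.
case: (boolP (Ed j t)) => // hE /=.
have rt := relv j t (ltnW tn); have rt1 := relv j t.+1 tn; have r0 := relrr j.
have ne : #|tri j (v j t) (v j t.+1)| = 3.
  apply: card_tri; apply/eqP => E.
  - by move: rt; rewrite -E r0; lia.
  - by move: rt1; rewrite -E rt; lia.
  - by move: rt1; rewrite -E r0; lia.
have [a [b [c [d [q p]]]]] := Hsat _ j ne hE.
have nH : ~ pat H a b c d by move=> hp; apply: (Hfree j); exists a, b, c, d.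
move: q => [q1 [q2 q3]].
have eqs : forall x y z, rel j x < rel j y -> rel j y < rel j z ->
    tri x y z = tri j (v j t) (v j t.+1) -> [/\ x = j, y = v j t & z = v j t.+1].
  move=> x y z h1 h2 E; apply: (tri_eq_sorted (rel j) _ _ _ _ _ _ (rel_inj j) h1 h2 _ _ E); lia.
case: p => [[h1 h2]|[h1 h2]]; rewrite !in_setU1 in h1 h2.
- case/orP: h1 => [/eqP E1|h1].
    have [Ea Eb Ec] := eqs _ _ _ q1 q2 E1; subst a b c.
    case/orP: h2 => [/eqP E2|h2].
      have [_ E3 _] := eqs _ _ _ (ltn_trans q1 q2) q3 E2.
      by move: rt1; rewrite E3 rt; lia.
    apply/orP; right; apply/existsP; exists d; rewrite h2 andbT; lia.
  case/orP: h2 => [/eqP E2|h2]; last by exfalso; apply: nH; left.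
  have [Ea Ec Ed'] := eqs _ _ _ (ltn_trans q1 q2) q3 E2; subst a c d.
  apply/orP; left; apply/existsP; exists b; rewrite triC2 h1 andbT; lia.
- case/orP: h1 => [/eqP E1|h1].
    have [Eb _ _] := eqs _ _ _ q2 q3 E1; subst b; lia.
  case/orP: h2 => [/eqP E2|h2]; last by exfalso; apply: nH; right.
  have [_ Eb Ed'] := eqs _ _ _ q1 (ltn_trans q2 q3) E2; subst b d; lia.
Qed.


Definition W j t : {set 'I_n} := odflt set0 [pick e in H | (j \in e) && (v j t \in e)].

Lemma W_spec j t : In j t || Out j t -> [/\ W j t \in H, j \in W j t & v j t \in W j t].
Proof.
move=> hu.
have [w hw] : exists w, tri j (v j t) w \in H.
  case/orP: hu => /existsP [w /andP [_ hw]]; by exists w.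
rewrite /W; case: pickP => [e /andP [he /andP [h1 h2]]|none] //=.
by move: (none (tri j (v j t) w)); rewrite hw /tri !inE !eqxx /= orbT.
Qed.

Lemma v_neq j t : 0 < t -> t < n -> v j t != j.
Proof. by move=> t0 tn; apply/eqP => E; move: (relv j t tn); rewrite E relrr; lia. Qed.

Definition Dm1 := [set p : 'I_n * 'I_n | (1 < p.2) && (p.2 < n.-1) && (In p.1 p.2 || Out p.1 p.2)].
Definition Dm2 := [set p : 'I_n * 'I_n | (0 < p.2) && (p.2.+1 < n) && Ed p.1 p.2].
Definition f1 (p : 'I_n * 'I_n) := (W p.1 p.2, (p.1, v p.1 p.2)).
Definition f2 (p : 'I_n * 'I_n) :=
  (tri p.1 (v p.1 p.2) (v p.1 p.2.+1), (v p.1 p.2, v p.1 p.2.+1)).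
Definition Tg := \bigcup_(e in H) \bigcup_(x in e) [set (e, (x, y)) | y in e :\ x].

Lemma Tg_card : #|Tg| <= 6 * #|H|.
Proof.
apply: leq_trans (card_bigcup_le _ _ _ _) _.
have -> : 6 * #|H| = \sum_(e in H) 6 by rewrite sum_nat_const mulnC.
apply: leq_sum => e he.
apply: leq_trans (card_bigcup_le _ _ _ _) _.
have -> : 6 = \sum_(x in e) 2 by rewrite sum_nat_const H3.
apply: leq_sum => x hx.
apply: leq_trans (leq_imset_card _ _) _.
by move: (H3 _ he); rewrite (cardsD1 x) hx => /eqP; rewrite eqSS => /eqP ->.
Qed.

Lemma card_pairs (P : 'I_n -> 'I_n -> bool) :
  #|[set p : 'I_n * 'I_n | P p.1 p.2]| = \sum_(j : 'I_n) \sum_(t : 'I_n) P j t.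
Proof.
rewrite -sum1_card (eq_bigl (fun p => P p.1 p.2)); last by move=> p; rewrite inE.
rewrite big_mkcond /= -(pair_bigA _ (fun j t => if P j t then 1 else 0)) /=.
by apply: eq_bigr => j _; apply: eq_bigr => t _; case: (P j t).
Qed.

Lemma low_bound : n * (n - 4) <= 6 * #|H|.
Proof.
have C j := @comb n (In j) (Out j) (Ed j) (F2 j) (F1 j) (F3 j) (ltac:(lia)).
have S : n * (n - 4) <= #|Dm1| + #|Dm2|.
  have c1 : #|Dm1| = \sum_(j : 'I_n) \sum_(t : 'I_n) ((1 < t) && (t < n.-1) && (In j t || Out j t))
    := card_pairs (fun j t => (1 < t) && (t < n.-1) && (In j t || Out j t)).
  have c2 : #|Dm2| = \sum_(j : 'I_n) \sum_(t : 'I_n) ((0 < t) && (t.+1 < n) && Ed j t)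
    := card_pairs (fun j t => (0 < t) && (t.+1 < n) && Ed j t).
  rewrite c1 c2 -big_split /=.
  have -> : n * (n - 4) = \sum_(j : 'I_n) (n - 4) by rewrite sum_nat_const card_ord.
  by apply: leq_sum => j _; apply: C.
have i1 : {in Dm1 &, injective f1}.
  move=> [j t] [j' t']; rewrite !inE /= => /andP [/andP [h1 h2] _] /andP [/andP [h1' h2'] _] [_ E1 E2].
  subst j'; congr pair; apply: ord_inj.
  have a1 := relv j t (ltn_ord t); have a2 := relv j t' (ltn_ord t'); have E2' : v j t = v j t' by apply: ord_inj; exact: E2. rewrite E2' in a1; lia.
have i2 : {in Dm2 &, injective f2}.
  move=> [j t] [j' t']; rewrite !inE /= => /andP [/andP [h1 h2] _] /andP [/andP [h1' h2'] _] [E0 E1 E2].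
  have E1'' : v j t = v j' t' by apply: ord_inj; exact: E1.
  have : j \in tri j' (v j' t') (v j' t'.+1) by rewrite -E0 /tri !inE eqxx.
  move/in_tri => [Ej|[Ej|Ej]].
  - subst j'; congr pair; apply: ord_inj.
    have a1 := relv j t (ltn_ord t); have a2 := relv j t' (ltn_ord t'); have E1' : v j t = v j t' by apply: ord_inj; exact: E1. rewrite E1' in a1; lia.
  - have E1' : v j t = v j' t' by apply: ord_inj; exact: E1.
    by move: (v_neq j t h1 (ltnW h2)); rewrite E1' -Ej eqxx.
  - have E2' : v j t.+1 = v j' t'.+1 by apply: ord_inj; exact: E2.
    by move: (v_neq j t.+1 (ltn0Sn t) h2); rewrite E2' -Ej eqxx.
have s1 : f1 @: Dm1 \subset Tg.
  apply/subsetP => x /imsetP [[j t] hp ->]; move: hp; rewrite inE /= => /andP [/andP [h1 h2] hu].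
  have [hW hj hv] := W_spec _ _ hu.
  apply/bigcupP; exists (W j t) => //; apply/bigcupP; exists j => //.
  apply/imsetP; exists (v j t) => //; rewrite !inE hv andbT.
  by apply: v_neq; lia.
have s2 : f2 @: Dm2 \subset Tg.
  apply/subsetP => x /imsetP [[j t] hp ->]; move: hp; rewrite inE /= => /andP [/andP [h1 h2] hE].
  apply/bigcupP; exists (tri j (v j t) (v j t.+1)) => //; apply/bigcupP; exists (v j t).
    by rewrite /tri !inE eqxx orbT.
  apply/imsetP; exists (v j t.+1) => //; rewrite !inE eqxx orbT andbT.
  apply/eqP => E; move: (relv j t.+1 h2); rewrite E relv; lia.
have dj : f1 @: Dm1 :&: f2 @: Dm2 = set0.
  apply/setP => x; rewrite !inE; apply/negP => /andP [/imsetP [[j t] hp ->] /imsetP [[j' t'] hp' E]].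
  move: hp hp'; rewrite !inE /= => /andP [/andP [h1 h2] _] /andP [/andP [h1' h2'] _].
  case: E => _ Ej Ev.
  have Ev' : v j t = v j' t'.+1 by apply: ord_inj; exact: Ev.
  move: (rel_next j' t' h2'); rewrite -Ej -Ev' relv; lia.
have sU : f1 @: Dm1 :|: f2 @: Dm2 \subset Tg by rewrite subUset s1 s2.
have U := subset_leq_card sU.
rewrite cardsU dj cards0 subn0 !card_in_imset // in U.
exact: leq_trans S (leq_trans U Tg_card).
Qed.
End Low.

From mathcomp Require Import ring lra.
Import Order.TTheory GRing.Theory Num.Theory.

Lemma binC3 n : 'C(n, 3) * 6 = n * n.-1 * n.-2.
Proof.
have := bin_ffact n 3; rewrite (_ : 3`! = 6) // => ->.
by rewrite !ffactnS ffactn0 muln1 mulnA -subn2 -subn1 subnS.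
Qed.

Lemma sat_low n : 3 < n -> n * (n - 4) <= 6 * sat_circ n D1.
Proof.
move=> n3; rewrite /sat_circ.
elim/big_ind: _ => [|x y hx hy|H hH].
- rewrite [6 * _]mulnC binC3 -mulnA leq_mul2l; apply/orP; right.
  apply: leq_trans (_ : n.-1 <= _); first lia.
  by apply: leq_pmulr; lia.
- by rewrite /minn; case: ifP.
- exact: low_bound.
Qed.

Lemma sat_up n : 0 < n -> 4 * sat_circ n D1 <= n * n + 6 * n.
Proof.
move=> n0; apply: (leq_trans _ (Hs_size n n0)).
rewrite leq_mul2l /= /sat_circ; exact: (bigminn_le _ (fun H : {set {set 'I_n}} => saturated D1 H) (fun H => #|H|) ('C(n,3)) (Hs n) (Hs_saturated n n0)).
Qed.

Local Open Scope ring_scope.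

Theorem propositionA6 :
  exists (C : rat) (N : nat), forall n : nat, (N <= n)%N ->
    (n%:R ^+ 2 / 6 - C * n%:R <= (sat_circ n D1)%:R :> rat) /\
    ((sat_circ n D1)%:R <= n%:R ^+ 2 / 4 + C * n%:R :> rat).
Proof.
exists 2, 4%N => n n4.
have l := sat_low n n4.
have u := sat_up n (leq_trans (isT : (0 < 4)%N) n4).
have l' : (n * n <= 6 * sat_circ n D1 + 4 * n)%N.
  have -> : (n * n = n * (n - 4) + 4 * n)%N by rewrite mulnC -mulnDl subnK.
  by rewrite leq_add2r.
move: l' u; rewrite -!(ler_nat rat) !natrD !natrM.
set s := (sat_circ n D1)%:R; set m := n%:R.
have hm : 0 <= m by rewrite ler0n.
move=> l' u; split; lra.
Qed.
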